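(* For $s,t\in\mu_r$ and $v,w\in\mathcal{A}_r$: \[ y\diamond_s vz_t^\delta w=(y\diamond_s v)z_t^\delta w+vz_t^\delta(y\diamond_s w)+vz_t^\delta(z_s^\delta-z_t^\delta)w. \]
   Context: Fix $r\ge1$, $\mu_r$ the $r$th roots of unity, $\mathcal{A}_r=\mathbb{Q}\langle x,y_s\mid s\in\mu_r\rangle$ the free noncommutative polynomial algebra over $\mathbb{Q}$, $\mathcal{A}_1=\mathbb{Q}\langle x,y\rangle$ with $y=y_1$. Write $z=x+y_1$, $z_s=x+y_s$, $\delta(1)=0$, $\delta(s)=1$ ($s\ne1$), $z_s^\delta=x+\delta(s)y_s$, $z_{k,s}=x^{k-1}y_s$. Let $\varphi$ be the algebra automorphism of $\mathcal{A}_r$ with $\varphi(x)=z$, $\varphi(y_s)=\delta(s)y_s-y_1$. Every word is uniquely $z_{k_1,s_1}\cdots z_{k_l,s_l}x^a$ ($l,a\ge0$); define linear maps $\mathcal{I}(z_{k_1,s_1}\cdots z_{k_l,s_l}x^a)=z_{k_1,s_1}z_{k_2,s_1s_2}\cdots z_{k_l,s_1\cdots s_l}x^a$ and $M_s(z_{k_1,s_1}\cdots z_{k_l,s_l}x^a)=z_{k_1,ss_1}z_{k_2,s_2}\cdots z_{k_l,s_l}x^a$ (with $M_s(x^a)=x^a$), and $\psi_s=\varphi\circ\mathcal{I}\circ M_s$. Diamond product: for $s\in\mu_r$, $\diamond_s:\mathcal{A}_1\times\mathcal{A}_r\to\mathcal{A}_r$ is the $\mathbb{Q}$-bilinear map defined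 recursively on words by $1\diamond_s w=w$, $v\diamond_s1=\psi_s\varphi(v)$, and for $v\in\mathcal{A}_1$, $w\in\mathcal{A}_r$, $1\ne t\in\mu_r$: $vx\diamond_s wx=(v\diamond_s wx)x-(vy\diamond_s w)x$; $vy\diamond_s wx=(v\diamond_s wx)y+(vy\diamond_s w)x$; $vx\diamond_s wy=(v\diamond_s wy)x+(vx\diamond_s w)y$; $vy\diamond_s wy=(v\diamond_s wy)y-(vx\diamond_s w)y$; $vx\diamond_s wy_t=(v\diamond_s wy_t)x+(v\diamond_s wz_t)y_t-(vy\diamond_s w)y_t$; $vy\diamond_s wy_t=(v\diamond_s wy_t)y-(v\diamond_s wz_t)y_t+(vy\diamond_s w)y_t$. *)

(* Defs.v *)
From HB Require Import structures.
From mathcomp Require Import all_boot all_order all_algebra.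
From mathcomp Require Import finmap.
From mathcomp Require Import monalg.
Set Implicit Arguments. Unset Strict Implicit. Unset Printing Implicit Defensive.
Import GRing.Theory.
Local Open Scope ring_scope.

(* letters of A_r, r = n.+1 : None = x, Some s = y_s; mu_r is encoded
   additively as 'I_n.+1 (exponent of a fixed primitive root), 1 <-> 0. *)
Notation letter n := (option 'I_n.+1).
Definition word (n : nat) := seq (letter n).
HB.instance Definition _ n := Choice.copy (word n) (seq (letter n)).
Lemma word_unit n (u v : word n) : u ++ v = [::] -> u = [::] /\ v = [::].
Proof. by case: u; case: v. Qed.
HB.instance Definition _ n := Choice_isMonomialDef.Build (word n) (one := [::] : word n) (mul := @cat _ : word n -> word n -> word n)
  (@catA _) (@cat0s _) (@cats0 _) (@word_unit n).


Definition A (n : nat) := {malg rat[word n]}.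

Definition wd n (u : word n) : A n := << (u : word n) >>.
Definition lin n m (h : word n -> A m) (p : A n) : A m :=
  \sum_(u <- msupp p) p@_u *: h u.
Definition bilin n m k (h : word n -> word m -> A k) (p : A n) (q : A m) : A k :=
  \sum_(u <- msupp p) \sum_(u' <- msupp q) (p@_u * q@_u') *: h u u'.

Definition X n : A n := wd [:: None].
Definition Y n (s : 'I_n.+1) : A n := wd [:: Some s].
Definition delta n (s : 'I_n.+1) : rat := (s != 0)%:R.
Definition zs n (s : 'I_n.+1) : A n := X n + Y s.
Definition zdelta n (s : 'I_n.+1) : A n := X n + delta s *: Y s.

Definition phiL n (l : letter n) : A n :=
  match l with None => X n + Y (0 : 'I_n.+1) | Some s => delta s *: Y s - Y (0 : 'I_n.+1) end.
Definition phi n (p : A n) : A n := lin (fun u : word n => \prod_(l <- u) phiL l) p.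

(* I : replaces y_{s_1} .. y_{s_l} by y_{s_1}, y_{s_1 s_2}, ..., y_{s_1...s_l} *)
Fixpoint Iacc n (acc : 'I_n.+1) (u : seq (letter n)) : seq (letter n) :=
  match u with
  | [::] => [::]
  | None :: u' => None :: Iacc acc u'
  | Some s :: u' => Some (acc + s) :: Iacc (acc + s) u'
  end.
Definition Iw n (u : word n) : word n := Iacc 0 u.
Fixpoint Mw n (s : 'I_n.+1) (u : seq (letter n)) : seq (letter n) :=
  match u with
  | [::] => [::]
  | None :: u' => None :: Mw s u'
  | Some t :: u' => Some (s + t) :: u'
  end.
Definition psi n (s : 'I_n.+1) (p : A n) : A n :=
  phi (lin (fun u : word n => wd (Iw (Mw s u) : word n)) p).

Definition embL n (l : letter 0) : letter n := if l is Some _ then Some 0 else None.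
Definition emb n (p : A 0) : A n := lin (fun u : word 0 => wd (map (@embL n) u : word n)) p.

(* diamond product on words; arguments are the REVERSED words (head = last
   letter), k is a fuel equal to the total length (each recursive call
   decreases total length by exactly one). *)
Fixpoint dia n (s : 'I_n.+1) (k : nat) (rv : seq (letter 0)) (rw : seq (letter n))
  : A n :=
  match rv with
  | [::] => wd (rev rw : word n)
  | a :: rv' =>
    match rw with
    | [::] => psi s (phi (emb n (wd (rev rv : word 0))))
    | b :: rw' =>
      match k with
      | 0 => 0
      | k'.+1 =>
        let y1 := Y (0 : 'I_n.+1) in
        match a, b with
        | None, None =>
            dia s k' rv' rw * X n - dia s k' (Some ord0 :: rv') rw' * X n
        | Some _, None =>
            dia s k' rv' rw * y1 + dia s k' rv rw' * X n
        | None, Some t =>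
            if t == 0 then
              dia s k' rv' rw * X n + dia s k' rv rw' * y1
            else
              dia s k' rv' rw * X n
              + (dia s k' rv' (None :: rw') + dia s k' rv' rw) * Y t
              - dia s k' (Some ord0 :: rv') rw' * Y t
        | Some _, Some t =>
            if t == 0 then
              dia s k' rv' rw * y1 - dia s k' (None :: rv') rw' * y1
            else
              dia s k' rv' rw * y1
              - (dia s k' rv' (None :: rw') + dia s k' rv' rw) * Y t
              + dia s k' rv rw' * Y t
        end
      end
    end
  end.

Definition dia_word n (s : 'I_n.+1) (v : word 0) (w : word n) : A n :=
  dia s (size v + size w) (rev v) (rev w).

Definition diamond n (s : 'I_n.+1) (v : A 0) (w : A n) : A n :=
  bilin (@dia_word n s) v w.

Definition y1 : A 0 := Y (0 : 'I_1).

(* Main.v *)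
Require Import Defs.
From HB Require Import structures.
From mathcomp Require Import all_boot all_order all_algebra.
From mathcomp Require Import finmap monalg.
Import GRing.Theory.
Local Open Scope fset_scope.
Local Open Scope ring_scope.

Section Gen.
Variable n : nat.
Implicit Types p q : A n.

Lemma malgC_comm (c : rat) p : c%:MP * p = p * c%:MP.
Proof.
rewrite !malgM_def fgmulUg fgmulgU; apply: eq_bigr => k _.
by rewrite mulrC mul1m mulm1.
Qed.

Lemma scalerAr' (c : rat) p q : p * (c *: q) = c *: (p * q).
Proof. by rewrite -!mul_malgC mulrA -malgC_comm mulrA. Qed.

Lemma wd_cat (u v : word n) : wd (u ++ v) = wd u * wd v.
Proof. by rewrite /wd malgM_def fgmulUU mulr1. Qed.

Lemma wd_nil : wd ([::] : word n) = 1.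
Proof. by []. Qed.

Lemma monU (c : rat) (u : word n) : << c *g u >> = c *: wd u.
Proof. by rewrite -mul_malgC /wd malgM_def fgmulUU mulr1 mul1m. Qed.

Lemma malg_ind (F G : A n -> A n) :
  (forall p q, F (p + q) = F p + F q) -> (forall c p, F (c *: p) = c *: F p) ->
  (forall p q, G (p + q) = G p + G q) -> (forall c p, G (c *: p) = c *: G p) ->
  (forall u, F (wd u) = G (wd u)) -> forall p, F p = G p.
Proof.
move=> FD FZ GD GZ Hu p.
have F0 : F 0 = 0 by have := FD 0 0; rewrite addr0 => /eqP; rewrite -subr_eq subrr eq_sym => /eqP.
have G0 : G 0 = 0 by have := GD 0 0; rewrite addr0 => /eqP; rewrite -subr_eq subrr eq_sym => /eqP.
rewrite (monalgE p); elim: (msupp p : seq _) => [|k r IH].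
  by rewrite !big_nil F0 G0.
by rewrite !big_cons FD GD IH monU FZ GZ Hu.
Qed.
End Gen.

Section Lin.
Variables n m : nat.
Variable h : word n -> A m.

Lemma linEw {d : {fset word n}} {p : A n} : msupp p `<=` d ->
  lin h p = \sum_(u <- d) p@_u *: h u.
Proof.
move=> le; rewrite /lin (big_fset_incl _ le) //= => x _ /mcoeff_outdom ->.
by rewrite scale0r.
Qed.

Lemma linD (p q : A n) : lin h (p + q) = lin h p + lin h q.
Proof.
rewrite (linEw (msuppD_le p q)) (linEw (fsubsetUl _ (msupp q))) (linEw (fsubsetUr (msupp p) _)).
by rewrite -big_split; apply: eq_bigr => u _; rewrite mcoeffD scalerDl.
Qed.

Lemma linZ (c : rat) (p : A n) : lin h (c *: p) = c *: lin h p.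
Proof.
rewrite (linEw (msuppZ_le c p)) /lin scaler_sumr; apply: eq_bigr => u _.
by rewrite mcoeffZ scalerA.
Qed.

Lemma linU (u : word n) : lin h (wd u) = h u.
Proof. by rewrite (linEw (msuppU_le)) big_seq_fset1 mcoeffUU scale1r. Qed.
End Lin.

Section R. Variable R : ringType. Variables W D x y u : R.
Ltac ex := rewrite !(mulrDr,mulrDl,mulrBr,mulrBl,mulrA,opprD,opprB,opprK,addrA,mulrN,mulNr).
Lemma r_xx : W*x*x - D*x = W*x*(x+y) - (D*x + W*(x*y)).
Proof. ex. by rewrite [in RHS]addrAC addrK. Qed.
Lemma r_yx : W*x*y + D*x = D*x + W*(x*y).
Proof. by rewrite addrC mulrA. Qed.
Lemma r_yy0 : W*y*y - (W*(x+y) - D)*y = D*y + W*(y*y - x*y - y*y).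
Proof. ex. by rewrite [LHS]addrC !addrA. Qed.
Lemma r_yyt : W*u*y - (W*x + W*u)*u + D*u = D*u + W*(u*y - x*u - u*u).
Proof. ex. by rewrite [LHS]addrC !addrA. Qed.
Lemma r_xy0 : W*y*x + (W*(x+y) - D)*y = W*y*(x+y) - (D*y + W*(y*y - x*y - y*y)).
Proof. ex. rewrite [W*y*x + W*y*y - D*y]addrAC addrK [LHS]addrAC (addrAC (W*y*x)).
 done. Qed.
Lemma r_xyt : W*u*x + (W*x + W*u)*u - D*u = W*u*(x+y) - (D*u + W*(u*y - x*u - u*u)).
Proof. ex. rewrite [W*u*x + W*u*y - D*u]addrAC addrK -!addrA; congr (_ + _).
  by rewrite addrA addrC. Qed.
End R.
Section R2. Variable R : ringType.
Ltac ex := rewrite !(mulrDr,mulrDl,mulrBr,mulrBl,mulrA,opprD,opprB,opprK,addrA,mulrN,mulNr).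
Lemma r_zt (x y0 u : R) : x*y0 + (u*y0 - x*u - u*u) = (x+u)*(x+y0-(x+u)).
Proof.
have -> : x + y0 - (x + u) = y0 - u by rewrite opprD addrA (addrAC x) subrr add0r.
ex.
by rewrite (addrAC (x*y0)).
Qed.
Lemma r_final (c v a w Ev Ew zs : R) :
  c*(v*a*w) + ((Ev*a + v*(a*(c+zs - a)))*w + v*a*Ew)
  = (c*v + Ev)*a*w + v*a*(c*w + Ew) + v*a*(zs - a)*w.
Proof.
ex. rewrite -!addrA; do 2 congr (_ + _).
congr (_ + _). by rewrite addrA addrC.
Qed.
End R2.

Set Implicit Arguments.


Lemma linN n m (h : word n -> A m) (p : A n) : lin h (- p) = - lin h p.
Proof. by rewrite -scaleN1r linZ scaleN1r. Qed.

Section Dia.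
Variable n : nat.
Variable s : 'I_n.+1.

Definition Z : A n := X n + Y 0.
Definition cc : A n := Y 0 - delta s *: Y s.
Definition fL (l : letter n) : A n :=
  match l with None => X n * Y 0 | Some t => Y t * Y 0 - X n * Y t - Y t * Y t end.
Definition L (l : letter n) : A n := wd [:: l].
Fixpoint Ew (u : seq (letter n)) : A n :=
  match u with [::] => 0 | l :: u' => fL l * wd u' + L l * Ew u' end.
Definition Dr (rw : seq (letter n)) : A n := cc * wd (rev rw) + Ew (rev rw).

Lemma Ew_cat (u v : word n) : Ew (u ++ v) = Ew u * wd v + wd u * Ew v.
Proof.
elim: u => [|l u IH] /=; first by rewrite mul0r add0r wd_nil mul1r.
rewrite IH wd_cat mulrDr !mulrA mulrDl addrA.
rewrite (@wd_cat n [:: l] u).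
by [].
Qed.

Lemma Dr_cons l rw : Dr (l :: rw) = Dr rw * L l + wd (rev rw) * fL l.
Proof.
rewrite /Dr rev_cons -cats1 Ew_cat wd_cat.
have -> : Ew [:: l] = fL l by rewrite /= mulr0 addr0 wd_nil mulr1.
rewrite [in RHS]mulrDl !mulrA addrA.
by [].
Qed.

Lemma base_y (a : 'I_1) : dia s 1 [:: Some a] [::] = Dr [::].
Proof.
rewrite /= /Dr /= wd_nil mulr1 addr0 /emb linU /= /phi linU /= big_seq1 /=.
rewrite /delta eqxx scale0r sub0r /psi linN linU /= /phi linN linU /= big_seq1 /=.
by rewrite addr0 add0r opprB /cc.
Qed.

Lemma base_x : dia s 1 [:: None] [::] = wd [::] * Z - Dr [::].
Proof.
rewrite /= /Dr /= wd_nil mulr1 mul1r addr0 /emb linU /= /phi linU /= big_seq1 /=.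
rewrite /psi linD !linU /= /phi linD !linU /= !big_seq1 /= addr0 add0r.
by rewrite /cc /Z opprB.
Qed.
End Dia.

Unset Implicit Arguments.

Section D.
Variable n : nat.
Variable s : 'I_n.+1.
Implicit Types (rw : seq (letter n)) (k : nat) (a : 'I_1).
Local Notation W rw := (wd (rev rw : word n)).

Lemma dia_nil k rw : dia s k [::] rw = W rw.
Proof. by case: k. Qed.

Lemma st_yx k a rw : dia s k.+1 [:: Some a] (None :: rw)
  = dia s k [::] (None :: rw) * Y 0 + dia s k [:: Some a] rw * X n.
Proof. by []. Qed.
Lemma st_xx k rw : dia s k.+1 [:: None] (None :: rw)
  = dia s k [::] (None :: rw) * X n - dia s k [:: Some ord0] rw * X n.
Proof. by []. Qed.
Lemma st_yy0 k a rw : dia s k.+1 [:: Some a] (Some 0 :: rw)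
  = dia s k [::] (Some 0 :: rw) * Y 0 - dia s k [:: None] rw * Y 0.
Proof. by []. Qed.
Lemma st_xy0 k rw : dia s k.+1 [:: None] (Some 0 :: rw)
  = dia s k [::] (Some 0 :: rw) * X n + dia s k [:: None] rw * Y 0.
Proof. by []. Qed.
Lemma st_yyt k a rw t : t != 0 -> dia s k.+1 [:: Some a] (Some t :: rw)
  = dia s k [::] (Some t :: rw) * Y 0 - (dia s k [::] (None :: rw) + dia s k [::] (Some t :: rw)) * Y t
    + dia s k [:: Some a] rw * Y t.
Proof. by move/negbTE => /= ->. Qed.
Lemma st_xyt k rw t : t != 0 -> dia s k.+1 [:: None] (Some t :: rw)
  = dia s k [::] (Some t :: rw) * X n + (dia s k [::] (None :: rw) + dia s k [::] (Some t :: rw)) * Y t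
    - dia s k [:: Some ord0] rw * Y t.
Proof. by move/negbTE => /= ->. Qed.

Lemma W_cons l rw : W (l :: rw) = W rw * L l.
Proof. by rewrite rev_cons -cats1 wd_cat. Qed.

Lemma dia_y rw :
  (forall a, dia s (size rw).+1 [:: Some a] rw = Dr s rw) /\
  dia s (size rw).+1 [:: None] rw = W rw * Z n - Dr s rw.
Proof.
elim: rw => [|b rw [IHy IHx]]; first by split; [exact: base_y | exact: base_x].
rewrite (_ : size (b :: rw) = (size rw).+1) //.
split; [move=> a|]; case: b => [t|].
- case: (eqVneq t 0) => [->|nt].
    rewrite st_yy0 IHx !dia_nil Dr_cons !W_cons /L /Z /fL.
    exact: r_yy0.
  rewrite st_yyt // IHy !dia_nil Dr_cons !W_cons /L /Z /fL.
  exact: r_yyt.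
- rewrite st_yx IHy !dia_nil Dr_cons !W_cons /L /Z /fL.
  exact: r_yx.
- case: (eqVneq t 0) => [->|nt].
    rewrite st_xy0 IHx !dia_nil Dr_cons !W_cons /L /Z /fL.
    exact: r_xy0.
  rewrite st_xyt // IHy !dia_nil Dr_cons !W_cons /L /Z /fL.
  exact: r_xyt.
- rewrite st_xx IHy !dia_nil Dr_cons !W_cons /L /Z /fL.
  exact: r_xx.
Qed.
End D.


Lemma bilinU n m k (h : word n -> word m -> A k) (u : word n) (q : A m) :
  bilin h (wd u) q = lin (h u) q.
Proof.
rewrite /bilin /wd msuppU1 big_seq_fset1 /lin; apply: eq_bigr => u' _.
by rewrite mcoeffUU mul1r.
Qed.

Section Main.
Variable n : nat.
Variable s : 'I_n.+1.
Definition Elin (p : A n) : A n := lin (@Ew n) p.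

Lemma diamond_y (p : A n) : diamond s y1 p = cc s * p + Elin p.
Proof.
rewrite /diamond /y1 bilinU.
apply: (@malg_ind n (lin _) (fun p => cc s * p + Elin p)).
- by move=> ??; rewrite linD.
- by move=> ??; rewrite linZ.
- by move=> p1 q1; rewrite mulrDr /Elin linD addrACA.
- by move=> c p1; rewrite scalerAr' /Elin linZ scalerDr.
move=> u; rewrite linU /Elin linU /dia_word.
rewrite (_ : (size _ + size u)%N = (size (rev u)).+1); last by rewrite size_rev.
have -> : cc s * wd u + Ew u = Dr s (rev u) by rewrite /Dr revK.
exact: (@dia_y n s (rev u)).1 (0 : 'I_1).
Qed.

Lemma Elin_wordM (u : word n) (q : A n) : Elin (wd u * q) = Ew u * q + wd u * Elin q.
Proof.
apply: (@malg_ind n (fun q => Elin (wd u * q)) (fun q => Ew u * q + wd u * Elin q)).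
- by move=> ??; rewrite mulrDr /Elin linD.
- by move=> ??; rewrite scalerAr' /Elin linZ.
- by move=> p1 q1; rewrite /Elin linD !mulrDr addrACA.
- by move=> c p1; rewrite /Elin linZ scalerAr' scalerAr' scalerDr.
by move=> v; rewrite -wd_cat /Elin !linU Ew_cat.
Qed.

Lemma ElinM (p q : A n) : Elin (p * q) = Elin p * q + p * Elin q.
Proof.
apply: (@malg_ind n (fun p => Elin (p * q)) (fun p => Elin p * q + p * Elin q)).
- by move=> ??; rewrite mulrDl /Elin linD.
- by move=> ??; rewrite -scalerAl /Elin linZ.
- by move=> p1 q1; rewrite /Elin linD !mulrDl addrACA.
- by move=> c p1; rewrite /Elin linZ -!scalerAl scalerDr.
by move=> u; rewrite Elin_wordM /Elin linU.
Qed.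

Lemma Elin_zd (t : 'I_n.+1) : Elin (zdelta t) = zdelta t * (Z n - zdelta t).
Proof.
rewrite /zdelta /Elin linD linZ /X /Y !linU /= !mulr0 !addr0 wd_nil !mulr1.
rewrite /delta /Z; case: (eqVneq t 0) => [->|nt] /=.
  by rewrite scale0r addr0 scale0r addr0 (addrC (wd _)) addrK.
by rewrite scale1r !scale1r; apply: r_zt.
Qed.

Lemma cc_zd : cc s + zdelta s = Z n.
Proof. by rewrite /cc /zdelta /Z addrCA subrK addrC. Qed.
End Main.

Theorem mainTheorem11 (n : nat) (s t : 'I_n.+1) (v w : A n) :
  diamond s y1 (v * zdelta t * w)
  = diamond s y1 v * zdelta t * w
    + v * zdelta t * diamond s y1 w
    + v * zdelta t * (zdelta s - zdelta t) * w.
Proof.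
rewrite !diamond_y !ElinM Elin_zd -(@cc_zd n s).
exact: r_final.
Qed.
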